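(* Let $n\in\mathbb{N}$, $\hbar\in{]0,\infty[}$, $\mu\in\mathbb{R}$ and $f\in\bigoplus_k\mathscr{P}^{k,k}(\mathbb{C}^{1+n})$. Then $\Omega_{\hbar,\mu}(f)\mathbb{1}-f_{\mathrm{av}}\in\langle\mathcal{J}-\mu\rangle$.
   Context: $\mathscr{P}^{k,k}(\mathbb{C}^{1+n})$ is the span of $z^K\overline{z}^L$, $|K|=|L|=k$. Wick product: $f\star_\hbar g=\sum_K\frac{\hbar^{|K|}}{K!}\frac{\partial^{|K|}f}{\partial\overline{z}^K}\frac{\partial^{|K|}g}{\partial z^K}$; $\langle\mathcal{J}-\mu\rangle$ is the $^*$-ideal of $(\bigoplus_k\mathscr{P}^{k,k}(\mathbb{C}^{1+n}),\star_\hbar)$ (involution: complex conjugation) generated by $\mathcal{J}-\mu\mathbb{1}$, where $\mathcal{J}=\sum_jz_j\overline{z_j}$. $\tau_k$ is the linear functional on $\mathscr{P}^{k,k}$ with $\tau_k(z^K\overline{z}^L)=\delta_{K,L}\frac{K!\,n!}{(k+n)!}$. For $f=\sum_kf_k$ with $f_k\in\mathscr{P}^{k,k}$: $f_{\mathrm{av}}=\sum_k\mathcal{J}^k\tau_k(f_k)$ (pointwise powers) and $\Omega_{\hbar,\mu}(f)=\sum_k\hbar^k(\mu/\hbar)_{\downarrow,k}\tau_k(f_k)$, where $(x)_{\downarrow,k}=\prod_{j=0}^{k-1}(x-j)$. *)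

(* Defs.v *)
From HB Require Import structures.
From mathcomp Require Import all_boot all_order all_algebra.
From mathcomp Require Import mpoly.
Set Implicit Arguments. Unset Strict Implicit. Unset Printing Implicit Defensive.
Import Order.TTheory GRing.Theory Num.Theory.
Local Open Scope ring_scope.

(* Polynomials on C^{1+n} in z and zbar are encoded as polynomials in
   (1+n)+(1+n) commuting indeterminates: index [lshift _ j] is z_j and
   index [rshift _ j] is zbar_j. *)
Section Wick.
Variables (C : numClosedFieldType) (n : nat).
Local Notation N := n.+1.
Local Notation M := (N + N)%N.
Local Notation P := {mpoly C[M]}.

Definition zpart (m : 'X_{1..M}) : 'X_{1..N} := [multinom m (lshift N i) | i < N].
Definition zbpart (m : 'X_{1..M}) : 'X_{1..N} := [multinom m (rshift N i) | i < N].

Definition liftz (K : 'X_{1..N}) : 'X_{1..M} :=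
  [multinom (match split i with inl j => K j | inr _ => 0%N end) | i < M].
Definition liftzb (K : 'X_{1..N}) : 'X_{1..M} :=
  [multinom (match split i with inl _ => 0%N | inr j => K j end) | i < M].

Definition mfact (K : 'X_{1..N}) : nat := (\prod_(i < N) (K i)`!)%N.

(* Wick product f *_hb g = sum_K hb^|K|/K! d^K f/dzbar^K d^K g/dz^K ;
   the terms with |K| >= msize f vanish, so the sum is over |K| < msize f + 1. *)
Definition wick (hb : C) (f g : P) : P :=
  \sum_(K : 'X_{1..N < (msize f).+1})
     ((hb ^+ mdeg K) / (mfact K)%:R) *: (f^`M[liftzb K] * g^`M[liftz K]).

Definition Jpol : P := \sum_(j < N) 'X_(lshift N j) * 'X_(rshift N j).

(* f lies in (+)_k P^{k,k}: every monomial z^K zbar^L of f has |K| = |L| *)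
Definition balanced (p : P) : bool :=
  all (fun m => mdeg (zpart m) == mdeg (zbpart m)) (msupp p).

(* complex conjugation: conj (c z^K zbar^L) = conj(c) z^L zbar^K *)
Definition swapi (i : 'I_M) : 'I_M :=
  match split i with inl j => rshift N j | inr j => lshift N j end.
Definition swapm (m : 'X_{1..M}) : 'X_{1..M} := [multinom m (swapi i) | i < M].
Definition mconj (p : P) : P := \sum_(m <- msupp p) (p@_m)^* *: 'X_[swapm m].

Definition is_star_ideal (hb : C) (I : P -> Prop) : Prop :=
  (forall x, I x -> balanced x) /\
  I 0 /\
  (forall x y, I x -> I y -> I (x + y)) /\
  (forall (c : C) x, I x -> I (c *: x)) /\
  (forall a x, balanced a -> I x -> I (wick hb a x)) /\
  (forall a x, balanced a -> I x -> I (wick hb x a)) /\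
  (forall x, I x -> I (mconj x)).

Definition star_ideal_gen (hb : C) (g : P) (p : P) : Prop :=
  forall I : P -> Prop, is_star_ideal hb I -> I g -> I p.

(* tau_k (f_k), where f_k is the (k,k)-component of f *)
Definition tau (k : nat) (f : P) : C :=
  \sum_(m <- msupp f | (zpart m == zbpart m) && (mdeg (zpart m) == k))
     f@_m * ((mfact (zpart m))%:R * (n`!)%:R / ((k + n)`!)%:R).

Definition ffall (x : C) (k : nat) : C := \prod_(j < k) (x - j%:R).

(* f_av = sum_k J^k tau_k(f_k)   (f_k = 0 for k >= msize f) *)
Definition f_av (f : P) : P := \sum_(k < msize f) Jpol ^+ k * (tau k f)%:MP.

Definition Omega (hb mu : C) (f : P) : C :=
  \sum_(k < msize f) hb ^+ k * ffall (mu / hb) k * tau k f.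

End Wick.

(* Main.v *)
Require Import Defs.
From HB Require Import structures.
From mathcomp Require Import all_boot all_order all_algebra.
From mathcomp Require Import mpoly.
Set Implicit Arguments. Unset Strict Implicit. Unset Printing Implicit Defensive.
Import Order.TTheory GRing.Theory Num.Theory.
Local Open Scope ring_scope.

Section H.
Variables (C : numClosedFieldType) (n : nat).
Local Notation N := n.+1.
Local Notation M := (N + N)%N.
Local Notation P := {mpoly C[M]}.

Lemma split_ind (Q : 'I_M -> Prop) :
  (forall j, Q (lshift N j)) -> (forall j, Q (rshift N j)) -> forall i, Q i.
Proof. by move=> Hl Hr i; rewrite -(splitK i); case: (split i) => k; [apply Hl|apply Hr]. Qed.

Lemma split_l j : @split N N (lshift N j) = inl j.
Proof. by rewrite -[lshift N j]/(unsplit (inl j)) unsplitK. Qed.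
Lemma split_r j : @split N N (rshift N j) = inr j.
Proof. by rewrite -[rshift N j]/(unsplit (inr j)) unsplitK. Qed.

Lemma liftzb0 : liftzb (0%MM : 'X_{1..N}) = 0%MM :> 'X_{1..M}.
Proof. by apply/mnmP; elim/split_ind => j; rewrite mnmE ?split_l ?split_r ?mnm0E. Qed.
Lemma liftz0 : liftz (0%MM : 'X_{1..N}) = 0%MM :> 'X_{1..M}.
Proof. by apply/mnmP; elim/split_ind => j; rewrite mnmE ?split_l ?split_r ?mnm0E. Qed.
Lemma liftzbU (j : 'I_N) : liftzb U_(j)%MM = U_(rshift N j)%MM :> 'X_{1..M}.
Proof. by apply/mnmP; elim/split_ind => k; rewrite mnmE ?split_l ?split_r !mnm1E ?eq_rlshift ?eq_rshift. Qed.
Lemma liftzU (j : 'I_N) : liftz U_(j)%MM = U_(lshift N j)%MM :> 'X_{1..M}.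
Proof. by apply/mnmP; elim/split_ind => k; rewrite mnmE ?split_l ?split_r !mnm1E ?eq_lrshift ?eq_lshift. Qed.

Lemma mfact0 : mfact (0%MM : 'X_{1..N}) = 1%N.
Proof. by rewrite /mfact big1 // => i _; rewrite mnm0E. Qed.
Lemma mfactU (j : 'I_N) : mfact U_(j)%MM = 1%N.
Proof. by rewrite /mfact big1 // => i _; rewrite mnm1E; case: eqP. Qed.

Definition mj (j : 'I_N) : 'X_{1..M} := (U_(lshift N j)%MM + U_(rshift N j)%MM)%MM.

Lemma JpolE : Jpol C n = \sum_(j < N) 'X_[mj j].
Proof. by rewrite /Jpol; apply: eq_bigr => j _; rewrite mpolyXD. Qed.

Lemma balancedJ : balanced (Jpol C n).
Proof.
rewrite /balanced JpolE; apply/allP => m /msupp_sum_le /flattenP [s /mapP [j _ ->]].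
rewrite /mj msuppX inE => /eqP -> /=.
suff -> : zpart (U_(lshift N j)%MM + U_(rshift N j)%MM)%MM = zbpart (U_(lshift N j)%MM + U_(rshift N j)%MM)%MM by [].
apply/mnmP => i; rewrite !mnmE; rewrite eq_lrshift eq_rlshift eq_lshift eq_rshift.
by rewrite addn0 add0n.
Qed.

Lemma mj_inj : injective mj.
Proof.
move=> j k /mnmP /(_ (lshift N j)); rewrite !mnmDE !mnm1E eq_rlshift !eq_lshift eqxx.
by rewrite eq_rlshift addn0; case: eqP.
Qed.

Lemma msizeJ : (2 < msize (Jpol C n))%N.
Proof.
have -> : 2%N = mdeg (mj ord0) by rewrite /mj mdegD !mdeg1.
apply: msize_mdeg_lt; rewrite mcoeff_msupp JpolE raddf_sum /=.
rewrite (bigD1 ord0) //= big1 ?addr0; first by rewrite mcoeffX eqxx oner_neq0.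
by move=> j /negbTE nj; rewrite mcoeffX; case: eqP => // /mj_inj /eqP; rewrite nj.
Qed.

Definition Ez (p : P) : P := \sum_(j < N) 'X_(lshift N j) * p^`M(lshift N j).

Definition pij (j : 'I_N) (K : 'X_{1..N}) : nat :=
  \prod_(i < M) (mj j i)^_(liftzb K i).

Lemma dJ K : (Jpol C n)^`M[liftzb K] = \sum_(j < N) (pij j K)%:R *: 'X_[mj j - liftzb K].
Proof. by rewrite JpolE raddf_sum; apply: eq_bigr => j _; exact: mderivmX. Qed.

Lemma pij_zero j (K : 'X_{1..N}) : K != 0%MM -> K != U_(j)%MM -> pij j K = 0%N.
Proof.
move=> K0 K1.
have [/existsP [k hk]|] := boolP [exists k, ((j == k) < K k)%N].
  rewrite /pij (bigD1 (rshift N k)) //= /mj mnmDE !mnm1E eq_lrshift eq_rshift /liftzb mnmE split_r.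
  by rewrite ffact_small.
rewrite negb_exists => /forallP H; exfalso.
have [Kj0|Kj1] := boolP (K j == 0%N).
  move/negP: K0; apply; apply/eqP/mnmP => k; rewrite mnm0E.
  have := H k; case: (eqVneq j k) => [<- _|_]; [exact/eqP | by rewrite ltnNge negbK leqn0 => /eqP].
move/negP: K1; apply; apply/eqP/mnmP => k; rewrite mnm1E.
have := H k; case: (eqVneq j k) => [<-|_]; last by rewrite ltnNge negbK leqn0 => /eqP.
by rewrite ltnNge negbK; move: Kj1; case: (K j) => [|[|]].
Qed.


Lemma wickJ (hb : C) (p : P) :
  wick hb (Jpol C n) p = Jpol C n * p + hb *: Ez p.
Proof.
rewrite /wick /Ez [in RHS]JpolE mulr_suml scaler_sumr -big_split /=.
under eq_bigr => K _ do rewrite dJ mulr_suml scaler_sumr.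
rewrite exchange_big /=; apply: eq_bigr => j _.
have hb0 : (mdeg (0%MM : 'X_{1..N}) < (msize (Jpol C n)).+1)%N by rewrite mdeg0.
have hb1 : (mdeg (U_(j)%MM : 'X_{1..N}) < (msize (Jpol C n)).+1)%N.
  by rewrite mdeg1; have := msizeJ; case: (msize _) => [|[|]].
pose K0 : 'X_{1..N < (msize (Jpol C n)).+1} := BMultinom hb0.
pose K1 : 'X_{1..N < (msize (Jpol C n)).+1} := BMultinom hb1.
have K10 : K1 != K0.
  rewrite bmeqP /=; apply/negP => /eqP/mnmP/(_ j); rewrite mnm1E mnm0E eqxx //.
rewrite (bigD1 K0) //= (bigD1 K1) /=; last by rewrite K10.
rewrite big1 ?addr0; last first.
  move=> K /andP [KK1 KK0]; rewrite pij_zero ?scale0r ?mul0r ?scaler0 //.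
congr (_ + _).
  rewrite mdeg0 mfact0 expr0 divr1 scale1r liftzb0 liftz0 mderivm0m subm0.
  by rewrite /pij liftzb0 big1 ?scale1r // => i _; rewrite mnm0E.
rewrite mdeg1 mfactU expr1 divr1 liftzbU liftzU mderivmU1m /mj addmK.
rewrite /pij liftzbU big1 ?scale1r // => i _.
rewrite mnm1E; case: eqP => [<-|]; last by rewrite ffactn0.
by rewrite mnmDE !mnm1E eq_lrshift eqxx.
Qed.


Lemma dJl (j : 'I_N) : (Jpol C n)^`M(lshift N j) = 'X_(rshift N j).
Proof.
rewrite JpolE raddf_sum /= (bigD1 j) //= big1 ?addr0.
  by rewrite mderivX /mj mnmDE !mnm1E eqxx eq_rlshift addn0 scale1r addmC addmK.
move=> k nkj; rewrite mderivX /mj mnmDE !mnm1E eq_rlshift eq_lshift (negbTE nkj).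
by rewrite scale0r.
Qed.

Lemma EzJ : Ez (Jpol C n) = Jpol C n.
Proof. by rewrite /Ez /Jpol; apply: eq_bigr => j _; rewrite dJl. Qed.

Lemma EzM p q : Ez (p * q) = Ez p * q + p * Ez q.
Proof.
rewrite /Ez mulr_suml mulr_sumr -big_split /=; apply: eq_bigr => j _.
by rewrite mderivM mulrDr; congr (_ + _); [exact: mulrA | exact: mulrCA].
Qed.

Lemma EzC c : Ez c%:MP = 0.
Proof. by rewrite /Ez big1 // => j _; rewrite mderivC mulr0. Qed.

Lemma EzD p q : Ez (p + q) = Ez p + Ez q.
Proof. by rewrite /Ez -big_split /=; apply: eq_bigr => j _; rewrite mderivD mulrDr. Qed.

Lemma EzB p q : Ez (p - q) = Ez p - Ez q.
Proof. by rewrite /Ez -sumrB /=; apply: eq_bigr => j _; rewrite mderivB mulrBr. Qed.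

Lemma EzJk k : Ez (Jpol C n ^+ k) = k%:R *: Jpol C n ^+ k.
Proof.
elim: k => [|k IH]; first by rewrite expr0 -mpolyC1 EzC scale0r.
by rewrite exprS EzM EzJ IH -scalerAr -natr1 scalerDl scale1r addrC.
Qed.

End H.

From mathcomp Require Import ring.

Lemma aux1 (R : comRingType) (J H U K A B Jk : R) :
  J * Jk - A * B * (U - H * K) =
  J * (Jk - A * B) + H * (K * Jk - 0) + - (H * K) * (Jk - A * B) +
  A * B * (J - U).
Proof. ring. Qed.

Theorem proposition5p7 (C : numClosedFieldType) (n : nat) (hb mu : C)
    (f : {mpoly C[n.+1 + n.+1]}) :
  0 < hb -> mu \is Num.real -> balanced f ->
  star_ideal_gen hb (Jpol C n - mu%:MP) ((Omega hb mu f)%:MP - f_av f).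
Proof.
move=> hbpos _ _ I [_ [I0 [ID [IZ [IL [IR _]]]]]] Ig.
pose c k := hb ^+ k * ffall (mu / hb) k.
have hb0 : hb != 0 by rewrite gt_eqF.
have ck1 : forall k, c k.+1 = c k * (mu - hb * k%:R).
  move=> k; rewrite /c /ffall big_ord_recr /= exprSr; field; exact: hb0.
have Ix : forall k, I (Jpol C n ^+ k - (c k)%:MP).
  elim => [|k IH].
    by rewrite /c expr0 mul1r /ffall big_ord0 mpolyC1 subrr.
  have -> : Jpol C n ^+ k.+1 - (c k.+1)%:MP =
      wick hb (Jpol C n) (Jpol C n ^+ k - (c k)%:MP)
      + (- (hb * k%:R)) *: (Jpol C n ^+ k - (c k)%:MP)
      + c k *: (Jpol C n - mu%:MP).
    rewrite wickJ EzB EzC EzJk ck1 -!mul_mpolyC !rmorphM !rmorphB /= ?rmorphN.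
    rewrite !rmorphM /=; move: (Jpol C n) (hb%:MP_[n.+1 + n.+1]) (mu%:MP_[n.+1 + n.+1]) (k%:R%:MP_[n.+1 + n.+1]) ((hb ^+ k)%:MP_[n.+1 + n.+1]) ((ffall (mu / hb) k)%:MP_[n.+1 + n.+1]) => J H U K A B. rewrite exprS; exact: aux1.
  apply ID; [apply ID | by apply: IZ].
  - by apply: IL => //; exact: balancedJ.
  - by apply: IZ.
rewrite /Omega /f_av rmorph_sum -sumrB.
apply: (big_ind (fun x => I x)) => //.
move=> k _.
have -> : (hb ^+ k * ffall (mu / hb) k * tau k f)%:MP - Jpol C n ^+ k * (tau k f)%:MP
   = (- tau k f) *: (Jpol C n ^+ k - (c k)%:MP).
  rewrite -!mul_mpolyC /c !rmorphM /= rmorphN; ring.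
by apply: IZ.
Qed.
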